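(* Let $n\ge 1$ and consider the single-input single-output linear system \[ \dot x = A_0 x + b_y y + b_u u,\qquad y = c_0 x, \] with state $x(t)\in\mathbb{R}^n$, input $u$ and output $y$, where $c_0=[1,0,\dots,0]$, $A_0\in\mathbb{R}^{n\times n}$ is a strictly stable (Hurwitz) matrix in observable canonical form (i.e. $A_0$ has ones on the superdiagonal, first column equal to $-[\hat a_1,\dots,\hat a_n]^T$ and zeros elsewhere, so that its characteristic polynomial is $s^n+\hat a_1 s^{n-1}+\dots+\hat a_n$), and $b_y,b_u\in\mathbb{R}^n$ are constant vectors. Let $\theta_y(t),\theta_u(t)\in\mathbb{R}^n$ evolve according to \[ \dot\theta_y = A_0^T\theta_y + c_0^T y,\qquad \dot\theta_u = A_0^T\theta_u + c_0^T u, \] from arbitrary initial conditions. Let $C_0$ be the observability matrix of $(c_0,A_0)$, i.e. the matrix with rows $c_0, c_0A_0,\dots,c_0A_0^{n-1}$, and let $\Theta_y=[\theta_y,\ A_0^T\theta_y,\dots,(A_0^T)^{n-1}\theta_y]$ and $\Theta_u=[\theta_u,\ A_0^T\theta_u,\dots,(A_0^T)^{n-1}\theta_u]$ be the controllability matrices of $(A_0^T,\theta_y)$ and $(A_0^T,\theta_u)$. Define $E_y=C_0^{-1}\Theta_y^T$ and $E_u=C_0^{-1}\Theta_u^T$. Then $E_y b_y + E_u b_u$ converges to $x$ exponentially as $t\to\infty$.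
   Context: This setting arises from an $n$-th order strictly proper SISO plant with transfer function $\frac{b_1s^{n-1}+\dots+b_n}{s^n+a_1s^{n-1}+\dots+a_n}$ in observable canonical form, with $b_y=[\hat a_1-a_1,\dots,\hat a_n-a_n]^T$ and $b_u=[b_1,\dots,b_n]^T$; the lemma holds for any constant vectors $b_y,b_u$ as stated. *)

(* Defs.v *)
From HB Require Import structures.
From mathcomp Require Import all_boot all_order all_algebra.
From mathcomp Require Import complex.
From mathcomp Require Import all_classical all_reals.
From mathcomp Require Import topology normedtype derive sequences.
From mathcomp.analysis Require Import exp.
Set Implicit Arguments. Unset Strict Implicit. Unset Printing Implicit Defensive.
Import Order.TTheory GRing.Theory Num.Theory.
Local Open Scope ring_scope.

Section Defs.
Variable R : realType.
Variable n : nat.  (* state dimension is n.+1, i.e. any dimension >= 1 *)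

Definition obs_canon (ahat : 'cV[R]_n.+1) : 'M[R]_n.+1 :=
  \matrix_(i, j) ((j == i.+1 :> nat)%:R - (j == 0 :> nat)%:R * ahat i 0).

Definition c0 : 'rV[R]_n.+1 := delta_mx 0 0.

Definition hurwitz (A : 'M[R]_n.+1) : Prop :=
  forall z : R[i], root (map_poly (real_complex R) (char_poly A)) z ->
    Re z < 0.

Definition obs_mx (c : 'rV[R]_n.+1) (A : 'M[R]_n.+1) : 'M[R]_n.+1 :=
  \matrix_(i, j) (c *m A ^+ i) 0 j.

Definition ctrb_mx (A : 'M[R]_n.+1) (th : 'cV[R]_n.+1) : 'M[R]_n.+1 :=
  \matrix_(i, j) (A ^+ j *m th) i 0.

End Defs.

(* Main.v *)
Require Import Defs.
From HB Require Import structures.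
From mathcomp Require Import all_boot all_order all_algebra.
From mathcomp Require Import complex.
From mathcomp Require Import all_classical all_reals.
From mathcomp Require Import topology normedtype derive sequences.
From mathcomp.analysis Require Import exp.
From mathcomp Require Import realfun.
From mathcomp Require Import ring lra.
Set Implicit Arguments. Unset Strict Implicit. Unset Printing Implicit Defensive.
Import Order.TTheory GRing.Theory Num.Theory.
Import numFieldNormedType.Exports.
Local Open Scope classical_set_scope.
Local Open Scope ring_scope.
Section An.
Variable R : realType.

Lemma mono_nincr (f df : R -> R) (a : R) : 0 < a ->
  (forall x : R, 0 < x -> is_derive x 1 f (df x)) ->
  (forall x : R, a < x -> df x <= 0) ->
  forall s t, a <= s -> s <= t -> f t <= f s.
Proof.
move=> a0 Hd Hle s t As st.
have [->|st'] := eqVneq s t; first by [].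
have lst : s < t by rewrite lt_neqAle st' st.
have H1 : forall x, x \in `]s, t[%R -> is_derive x 1 f (df x).
  move=> x; rewrite in_itv /= => /andP[sx _]; apply: Hd; lra.
have H2 : {within `[s, t], continuous f}.
  apply: derivable_within_continuous => x; rewrite in_itv /= => /andP[sx _].
  have x0 : 0 < x by lra.
  by case: (Hd x x0).
have [c cin E] := MVT lst H1 H2.
  move: cin; rewrite in_itv /= => /andP[sc ct].
  rewrite -subr_le0 E; apply: mulr_le0_ge0; first by apply: Hle; lra.
  lra.
Qed.

Lemma mono_ndecr (f df : R -> R) : 
  (forall x : R, 0 < x -> is_derive x 1 f (df x)) ->
  (forall x : R, 0 < x -> 0 <= df x) ->
  forall s t, 0 < s -> s <= t -> f s <= f t.
Proof.
move=> Hd Hle s t As st.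
have [->|st'] := eqVneq s t; first by [].
have lst : s < t by rewrite lt_neqAle st' st.
have H1 : forall x, x \in `]s, t[%R -> is_derive x 1 f (df x).
  move=> x; rewrite in_itv /= => /andP[sx _]; apply: Hd; lra.
have H2 : {within `[s, t], continuous f}.
  apply: derivable_within_continuous => x; rewrite in_itv /= => /andP[sx _].
  have x0 : 0 < x by lra.
  by case: (Hd x x0).
have [c cin H] := MVT lst H1 H2.
  move: cin; rewrite in_itv /= => /andP[sc ct].
  rewrite -subr_ge0 H; apply: mulr_ge0; first by apply: Hle; lra.
  lra.
Qed.

Lemma is_derive_expRM (c x : R) : is_derive x 1 (fun t => expR (c * t)) (c * expR (c * x)).
Proof.
have h : is_derive x 1 (c \*: (@id R)) (c *: (1:R)) := is_deriveZ c (is_derive_id x 1).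
have h2 : is_derive x 1 ( *%R c) c.
  move: h; rewrite /GRing.scale /= mulr1.
  by congr is_derive; apply/funext => t.
have H : is_derive x 1 (expR \o ( *%R c)) (expR (c * x) * c).
  by apply: is_derive1_comp.
by rewrite mulrC.
Qed.

Lemma isdM (u v : R -> R) (x du dv : R) : is_derive x 1 u du -> is_derive x 1 v dv ->
  is_derive x 1 (fun t => u t * v t) (u x * dv + v x * du).
Proof. by move=> hu hv; have := is_deriveM hu hv. Qed.

Lemma isdD (u v : R -> R) (x du dv : R) : is_derive x 1 u du -> is_derive x 1 v dv ->
  is_derive x 1 (fun t => u t + v t) (du + dv).
Proof. by move=> hu hv; have := is_deriveD hu hv. Qed.

Lemma isdC (x c : R) : is_derive x 1 (fun _ : R => c) 0.
Proof. exact: is_derive_cst. Qed.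

Lemma isdE (u : R -> R) (x du du' : R) : is_derive x 1 u du -> du = du' -> is_derive x 1 u du'.
Proof. by move=> h <-. Qed.

Lemma decay_step (a b f g : R -> R) (rho om K mu : R) :
  rho < 0 -> 0 < mu ->
  (forall t : R, 0 < t -> is_derive t 1 a (rho * a t - om * b t + f t)) ->
  (forall t : R, 0 < t -> is_derive t 1 b (om * a t + rho * b t + g t)) ->
  (forall t : R, 1 <= t -> f t ^+ 2 + g t ^+ 2 <= K * expR (- (mu * t))) ->
  exists K' nu : R, 0 < nu /\
    forall t : R, 1 <= t -> a t ^+ 2 + b t ^+ 2 <= K' * expR (- (nu * t)).
Proof.
move=> rho0 mu0 Ha Hb Hfg.
set al := - rho.
have al0 : 0 < al by rewrite /al; lra.
set nu := al * mu / (al + mu).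
have alm0 : 0 < al + mu by lra.
have nu0 : 0 < nu by rewrite /nu; apply: divr_gt0 => //; apply: mulr_gt0.
have nual : nu <= al.
  rewrite /nu ler_pdivrMr //; nra.
have numu : nu < mu.
  rewrite /nu ltr_pdivrMr //; nra.
have K0 : 0 <= K.
  have := Hfg 1 (lexx _); have := expR_gt0 (- (mu * 1)).
  move=> e0 h; have : 0 <= K * expR (- (mu * 1)) by apply: le_trans h; nra.
  by rewrite pmulr_lge0.
set K2 := K / (al * (mu - nu)).
have K20 : 0 <= K2 by rewrite /K2 divr_ge0 //; apply: mulr_ge0; lra.
have K2e : K2 * (nu - mu) = - (K / al).
  rewrite /K2; field; apply/andP; split; rewrite ?subr_eq0; apply/negP => /eqP; lra.
pose q t := (a t ^+ 2 + b t ^+ 2) * expR (nu * t) + K2 * expR ((nu - mu) * t).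
pose dq t := (2 * a t * (rho * a t - om * b t + f t) + 2 * b t * (om * a t + rho * b t + g t))
   * expR (nu * t) + (a t ^+ 2 + b t ^+ 2) * (nu * expR (nu * t))
   + K2 * ((nu - mu) * expR ((nu - mu) * t)).
have Hq : forall t : R, 0 < t -> is_derive t 1 q (dq t).
  move=> t t0; rewrite /q /dq.
  have sq : forall (u : R -> R) du, is_derive t 1 u du ->
      is_derive t 1 (fun s => u s ^+ 2) (2 * u t * du).
    move=> u du hu.
    have -> : (fun s => u s ^+ 2) = (fun s => u s * u s) by apply/funext => s; rewrite expr2.
    have := isdM hu hu; move=> h; apply: (isdE h); ring.
  apply: isdD; last first.
    have := isdM (isdC t K2) (is_derive_expRM (nu - mu) t); move=> h; apply: (isdE h); ring.
  have := isdM (isdD (sq _ _ (Ha t t0)) (sq _ _ (Hb t t0))) (is_derive_expRM nu t).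
  move=> h; apply: (isdE h); ring.
have Hdq : forall t : R, 1 < t -> dq t <= 0.
  move=> t t1; rewrite /dq.
  have -> : (nu - mu) * t = nu * t + - (mu * t) by ring.
  rewrite expRD.
  have E10 := expR_gt0 (nu * t); have E30 := expR_gt0 (- (mu * t)).
  have hfg := Hfg t (ltW t1).
  set E1 := expR (nu * t); set E3 := expR (- (mu * t)) in hfg E30 *.
  set A := a t; set B := b t; set F := f t in hfg *; set G := g t in hfg *.
  have rho_e : rho = - al by rewrite /al opprK.
  rewrite rho_e.
  have -> : K2 * ((nu - mu) * (E1 * E3)) = (K2 * (nu - mu)) * E1 * E3 by ring.
  rewrite K2e.
  have -> : (2 * A * (- al * A - om * B + F) + 2 * B * (om * A + - al * B + G)) * E1 +
     (A ^+ 2 + B ^+ 2) * (nu * E1) + - (K / al) * E1 * E3 =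
     E1 * ((- 2 * al + nu) * (A ^+ 2 + B ^+ 2) + 2 * (A * F + B * G) - K / al * E3).
    ring.
  rewrite pmulr_rle0 //.
  have H1 : 2 * al * (A * F + B * G) <= al ^+ 2 * (A ^+ 2 + B ^+ 2) + (F ^+ 2 + G ^+ 2).
    rewrite -subr_ge0.
    have -> : al ^+ 2 * (A ^+ 2 + B ^+ 2) + (F ^+ 2 + G ^+ 2) - 2 * al * (A * F + B * G)
      = (al * A - F) ^+ 2 + (al * B - G) ^+ 2 by ring.
    by apply: addr_ge0; apply: sqr_ge0.
  have H2 : al * (K / al * E3) = K * E3.
    by rewrite mulrA mulrCA divff ?mulr1 //; lra.
  rewrite -(pmulr_rle0 _ al0).
  have -> : al * ((- 2 * al + nu) * (A ^+ 2 + B ^+ 2) + 2 * (A * F + B * G) - K / al * E3)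
    = al * (nu - al) * (A ^+ 2 + B ^+ 2) - al ^+ 2 * (A ^+ 2 + B ^+ 2)
      + 2 * al * (A * F + B * G) - al * (K / al * E3) by ring.
  rewrite H2.
  have hr : 0 <= A ^+ 2 + B ^+ 2 by apply: addr_ge0; apply: sqr_ge0.
  have : al * (nu - al) * (A ^+ 2 + B ^+ 2) <= 0.
    apply: mulr_le0_ge0 => //; apply: mulr_ge0_le0; lra.
  lra.
have mono := mono_nincr ltr01 Hq Hdq.
exists (q 1), nu; split => // t t1.
have := mono 1 t (lexx _) t1.
rewrite /q.
have E10 := expR_gt0 (nu * t).
have : 0 <= K2 * expR ((nu - mu) * t) by apply: mulr_ge0 => //; exact: expR_ge0.
move=> h1 h2.
have h3 : (a t ^+ 2 + b t ^+ 2) * expR (nu * t) <= q 1 by rewrite /q; lra.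
have -> : a t ^+ 2 + b t ^+ 2 = (a t ^+ 2 + b t ^+ 2) * expR (nu * t) * expR (- (nu * t)).
  by rewrite -mulrA -expRD subrr expR0 mulr1.
by rewrite ler_pM2r ?expR_gt0.
Qed.
End An.

Section EBs.
Variable R : realType.
Definition EB (F : R -> R) := exists K mu : R, 0 < mu /\
  forall t : R, 1 <= t -> F t <= K * expR (- (mu * t)).

Lemma EB_le (F G : R -> R) : (forall t, 1 <= t -> F t <= G t) -> EB G -> EB F.
Proof.
move=> H [K [mu [mu0 HG]]]; exists K, mu; split => // t t1.
exact: le_trans (H t t1) (HG t t1).
Qed.

Lemma EB_add (F G : R -> R) : EB F -> EB G -> EB (fun t => F t + G t).
Proof.
move=> [K1 [m1 [m10 H1]]] [K2 [m2 [m20 H2]]].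
exists (`|K1| + `|K2|), (Num.min m1 m2); split; first by rewrite lt_min m10.
move=> t t1.
have t0 : 0 <= t by lra.
have E1 : expR (- (m1 * t)) <= expR (- (Num.min m1 m2 * t)).
  rewrite ler_expR lerN2; apply: ler_wpM2r => //; by rewrite ge_min lexx.
have E2 : expR (- (m2 * t)) <= expR (- (Num.min m1 m2 * t)).
  rewrite ler_expR lerN2; apply: ler_wpM2r => //; by rewrite ge_min lexx orbT.
have h1 := H1 t t1; have h2 := H2 t t1.
have a1 : K1 * expR (- (m1 * t)) <= `|K1| * expR (- (Num.min m1 m2 * t)).
  apply: le_trans (_ : `|K1| * expR (- (m1 * t)) <= _).
    by apply: ler_wpM2r; [exact: expR_ge0 | exact: ler_norm].
  by apply: ler_wpM2l.
have a2 : K2 * expR (- (m2 * t)) <= `|K2| * expR (- (Num.min m1 m2 * t)).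
  apply: le_trans (_ : `|K2| * expR (- (m2 * t)) <= _).
    by apply: ler_wpM2r; [exact: expR_ge0 | exact: ler_norm].
  by apply: ler_wpM2l.
rewrite mulrDl; lra.
Qed.

Lemma EB_scale (F : R -> R) (k : R) : 0 <= k -> EB F -> EB (fun t => k * F t).
Proof.
move=> k0 [K [mu [mu0 H]]]; exists (k * K), mu; split => // t t1.
by rewrite -mulrA; apply: ler_wpM2l => //; exact: H.
Qed.

Lemma EB0 : EB (fun _ => 0).
Proof. exists 0, 1; split => // t _; by rewrite mul0r. Qed.

End EBs.

Section Vec.
Variable R : realType.
Variable n : nat.
Variable A : 'M[R]_n.+1.
Variable e : R -> 'cV[R]_n.+1.
Hypothesis He : forall t : R, 0 < t -> forall i : 'I_n.+1,
  is_derive t 1 (fun s => e s i 0) ((A *m e t) i 0).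

Lemma derive_lc (c : 'I_n.+1 -> R) (t : R) : 0 < t ->
  is_derive t 1 (fun s => \sum_j c j * e s j 0) (\sum_j c j * (A *m e t) j 0).
Proof.
move=> t0.
have := @is_derive_sum _ _ _ n.+1 (fun j s => c j * e s j 0) t 1 (fun j => c j * (A *m e t) j 0).
rewrite fct_sumE; apply => j.
by have := isdM (isdC t (c j)) (He t0 j); move=> h; apply: (isdE h); ring.
Qed.

Lemma sq_le_sum (v : 'cV[R]_n.+1) i : v i 0 ^+ 2 <= \sum_k v k 0 ^+ 2.
Proof.
rewrite (bigD1 i) //= lerDl; apply: sumr_ge0 => k _; exact: sqr_ge0.
Qed.

Lemma back_bound : exists B : R, forall t : R, 0 < t -> t <= 1 ->
  forall i, e t i 0 ^+ 2 <= B.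
Proof.
set c := 2 * \sum_i \sum_j `|A i j|.
have c0 : 0 <= c by rewrite /c; apply: mulr_ge0 => //; apply: sumr_ge0 => i _;
  apply: sumr_ge0 => j _.
pose r s := \sum_k e s k 0 ^+ 2.
pose g s := r s * expR (c * s).
pose dg s := r s * (c * expR (c * s)) + expR (c * s) * (\sum_k (2 * e s k 0) * (A *m e s) k 0).
have Hg : forall s : R, 0 < s -> is_derive s 1 g (dg s).
  move=> s s0; rewrite /g /dg /r.
  apply: isdM; last exact: is_derive_expRM.
  have := @is_derive_sum _ _ _ n.+1 (fun j s => e s j 0 ^+ 2) s 1
     (fun k => (2 * e s k 0) * (A *m e s) k 0).
  rewrite fct_sumE; apply => j.
  have -> : (fun s => e s j 0 ^+ 2) = (fun s => e s j 0 * e s j 0)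
    by apply/funext => u; rewrite expr2.
  by have := isdM (He s0 j) (He s0 j); move=> h; apply: (isdE h); ring.
have Hdg : forall s : R, 0 < s -> 0 <= dg s.
  move=> s s0; rewrite /dg.
  have E0 := expR_gt0 (c * s).
  have -> : r s * (c * expR (c * s)) + expR (c * s) * (\sum_k (2 * e s k 0) * (A *m e s) k 0)
    = expR (c * s) * (c * r s + \sum_k (2 * e s k 0) * (A *m e s) k 0) by ring.
  apply: mulr_ge0; first exact: ltW.
  have -> : c * r s + \sum_k 2 * e s k 0 * (A *m e s) k 0 =
     \sum_k \sum_j (2 * `|A k j| * r s + 2 * A k j * e s k 0 * e s j 0).
    rewrite /c -mulrA mulr_suml mulr_sumr -big_split /=; apply: eq_bigr => k _.
    rewrite !mxE mulr_suml !mulr_sumr -big_split /=; apply: eq_bigr => j _.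
    ring.
  apply: sumr_ge0 => k _; apply: sumr_ge0 => j _.
  have hk := sq_le_sum (e s) k; have hj := sq_le_sum (e s) j.
  rewrite -/(r s) in hk hj.
  have h1 := sqr_ge0 (e s k 0 + e s j 0); have h2 := sqr_ge0 (e s k 0 - e s j 0).
  have [a0|a0] := lerP 0 (A k j).
    rewrite ger0_norm //; nra.
  rewrite ltr0_norm //; nra.
exists (g 1) => t t0 t1 i.
have := mono_ndecr Hg Hdg t0 t1.
rewrite /g.
have E1 : 1 <= expR (c * t).
  apply: le_trans (expR_ge1Dx _); rewrite lerDl; apply: mulr_ge0 => //; exact: ltW.
have := sq_le_sum (e t) i; rewrite -/(r t).
have : 0 <= r t by apply: sumr_ge0 => k _; exact: sqr_ge0.
nra.
Qed.


Local Notation cRe := complex.Re.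
Local Notation cIm := complex.Im.
Local Notation toC := (real_complex R).

Lemma ReM' (x y : R[i]) : cRe (x * y) = cRe x * cRe y - cIm x * cIm y.
Proof. by case: x => a b; case: y => c d /=. Qed.
Lemma ImM' (x y : R[i]) : cIm (x * y) = cRe x * cIm y + cIm x * cRe y.
Proof. case: x => a b; case: y => c d /=. ring. Qed.
Lemma ReD' (x y : R[i]) : cRe (x + y) = cRe x + cRe y.
Proof. by case: x => a b; case: y => c d /=. Qed.
Lemma ImD' (x y : R[i]) : cIm (x + y) = cIm x + cIm y.
Proof. by case: x => a b; case: y => c d /=. Qed.
Lemma Re0' : cRe (0 : R[i]) = 0. Proof. by []. Qed.
Lemma Im0' : cIm (0 : R[i]) = 0. Proof. by []. Qed.

Lemma ReSum (F : 'I_n.+1 -> R[i]) : cRe (\sum_j F j) = \sum_j cRe (F j).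
Proof. by elim/big_rec2: _ => // j x y _ <-; rewrite ReD'. Qed.
Lemma ImSum (F : 'I_n.+1 -> R[i]) : cIm (\sum_j F j) = \sum_j cIm (F j).
Proof. by elim/big_rec2: _ => // j x y _ <-; rewrite ImD'. Qed.

Definition Ac := map_mx toC A.
Definition Zre (r : 'rV[R[i]]_n.+1) (t : R) := \sum_j cRe (r 0 j) * e t j 0.
Definition Zim (r : 'rV[R[i]]_n.+1) (t : R) := \sum_j cIm (r 0 j) * e t j 0.

Lemma ZreD r1 r2 t : Zre (r1 + r2) t = Zre r1 t + Zre r2 t.
Proof. by rewrite /Zre -big_split; apply: eq_bigr => j _; rewrite mxE ReD' mulrDl. Qed.
Lemma ZimD r1 r2 t : Zim (r1 + r2) t = Zim r1 t + Zim r2 t.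
Proof. by rewrite /Zim -big_split; apply: eq_bigr => j _; rewrite mxE ImD' mulrDl. Qed.
Lemma ZreZ l r t : Zre (l *: r) t = cRe l * Zre r t - cIm l * Zim r t.
Proof.
rewrite /Zre /Zim !mulr_sumr -sumrB; apply: eq_bigr => j _; rewrite mxE ReM'; ring.
Qed.
Lemma ZimZ l r t : Zim (l *: r) t = cIm l * Zre r t + cRe l * Zim r t.
Proof.
rewrite /Zre /Zim !mulr_sumr -big_split /=; apply: eq_bigr => j _; rewrite mxE ImM'; ring.
Qed.

Lemma Zre_der r (t : R) : 0 < t -> is_derive t 1 (Zre r) (Zre (r *m Ac) t).
Proof.
move=> t0; have := derive_lc (fun j => cRe (r 0 j)) t0.
rewrite /Zre => h; apply: (isdE h).
rewrite (eq_bigr (fun j => \sum_k cRe (r 0 j) * (A j k * e t k 0))); last first.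
  by move=> j _; rewrite mxE mulr_sumr.
rewrite [RHS](eq_bigr (fun k => (\sum_j cRe (r 0 j * Ac j k)) * e t k 0)); last first.
  by move=> k _; rewrite mxE ReSum.
rewrite exchange_big /=; apply: eq_bigr => k _.
rewrite mulr_suml; apply: eq_bigr => j _.
rewrite mxE ReM' /=; ring.
Qed.

Lemma Zim_der r (t : R) : 0 < t -> is_derive t 1 (Zim r) (Zim (r *m Ac) t).
Proof.
move=> t0; have := derive_lc (fun j => cIm (r 0 j)) t0.
rewrite /Zim => h; apply: (isdE h).
rewrite (eq_bigr (fun j => \sum_k cIm (r 0 j) * (A j k * e t k 0))); last first.
  by move=> j _; rewrite mxE mulr_sumr.
rewrite [RHS](eq_bigr (fun k => (\sum_j cIm (r 0 j * Ac j k)) * e t k 0)); last first.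
  by move=> k _; rewrite mxE ImSum.
rewrite exchange_big /=; apply: eq_bigr => k _.
rewrite mulr_suml; apply: eq_bigr => j _.
rewrite mxE ImM' /=; ring.
Qed.

Definition Dec r := EB (fun t => Zre r t ^+ 2 + Zim r t ^+ 2).

Lemma Dec0 : Dec 0.
Proof.
apply: (@EB_le R _ (fun _ => 0)); last exact: EB0.
move=> t _.
rewrite /Zre /Zim !big1 ?expr0n ?addr0 // => j _; rewrite mxE mul0r //.
Qed.

Lemma DecD r1 r2 : Dec r1 -> Dec r2 -> Dec (r1 + r2).
Proof.
move=> h1 h2.
have := EB_add (EB_scale (ler0n _ 2) h1) (EB_scale (ler0n _ 2) h2).
apply: EB_le => t _ /=; rewrite ZreD ZimD.
set a1 := Zre r1 t; set a2 := Zre r2 t; set b1 := Zim r1 t; set b2 := Zim r2 t.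
rewrite -subr_ge0.
have -> : 2%:R * (a1 ^+ 2 + b1 ^+ 2) + 2%:R * (a2 ^+ 2 + b2 ^+ 2) - ((a1 + a2) ^+ 2 + (b1 + b2) ^+ 2)
  = (a1 - a2) ^+ 2 + (b1 - b2) ^+ 2 by ring.
by apply: addr_ge0; apply: sqr_ge0.
Qed.

Lemma DecZ l r : Dec r -> Dec (l *: r).
Proof.
move=> h.
have k0 : 0 <= cRe l ^+ 2 + cIm l ^+ 2 by apply: addr_ge0; apply: sqr_ge0.
have := EB_scale k0 h.
apply: EB_le => t _ /=; rewrite ZreZ ZimZ.
have -> : (cRe l * Zre r t - cIm l * Zim r t) ^+ 2 + (cIm l * Zre r t + cRe l * Zim r t) ^+ 2
  = (cRe l ^+ 2 + cIm l ^+ 2) * (Zre r t ^+ 2 + Zim r t ^+ 2) by ring.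
by [].
Qed.

Lemma Dec_step l r : cRe l < 0 -> Dec (r *m Ac - l *: r) -> Dec r.
Proof.
move=> l0 [K [mu [mu0 H]]].
set s := r *m Ac - l *: r.
have rs : r *m Ac = s + l *: r by rewrite /s subrK.
apply: (@decay_step R (Zre r) (Zim r) (Zre s) (Zim s) (cRe l) (cIm l) K mu l0 mu0).
- move=> t t0; apply: (isdE (Zre_der r t0)).
  rewrite rs ZreD ZreZ; ring.
- move=> t t0; apply: (isdE (Zim_der r t0)).
  rewrite rs ZimD ZimZ; ring.
- exact: H.
Qed.

Lemma cascade (c : 'rV[R[i]]_n.+1) (s : seq R[i]) :
  (forall z, z \in s -> cRe z < 0) -> forall q : {poly R[i]},
  Dec (c *m horner_mx Ac (q * \prod_(z <- s) ('X - z%:P))) ->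
  Dec (c *m horner_mx Ac q).
Proof.
elim: s => [|z s IH] Hs q H.
  by move: H; rewrite big_nil mulr1.
move: H; rewrite big_cons mulrA => H.
have Hs' : forall w, w \in s -> cRe w < 0 by move=> w ws; apply: Hs; rewrite inE ws orbT.
have := IH Hs' _ H.
rewrite rmorphM rmorphB /= horner_mx_X horner_mx_C => H2.
apply: (@Dec_step z); first by apply: Hs; rewrite inE eqxx.
move: H2; congr Dec.
by rewrite -mulmxE mulmxA mulmxBr mul_mx_scalar.
Qed.


Lemma Dec_all : (forall z : R[i], root (map_poly toC (char_poly A)) z -> cRe z < 0) ->
  forall c : 'rV[R[i]]_n.+1, Dec c.
Proof.
move=> Hh c.
have [rs Hrs] := closed_field_poly_normal (map_poly toC (char_poly A)).
have lc : lead_coef (map_poly toC (char_poly A)) = 1.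
  by rewrite lead_coef_map (monicP (char_poly_monic A)) rmorph1.
rewrite lc scale1r in Hrs.
have roots : forall z, z \in rs -> cRe z < 0.
  by move=> z zs; apply: Hh; rewrite Hrs root_prod_XsubC.
have := @cascade c rs roots 1.
rewrite mul1r -Hrs rmorph1 mulmx1; apply.
rewrite map_char_poly Cayley_Hamilton mulmx0; exact: Dec0.
Qed.

Lemma EB_comp : (forall z : R[i], root (map_poly toC (char_poly A)) z -> cRe z < 0) ->
  forall i : 'I_n.+1, EB (fun t => e t i 0 ^+ 2).
Proof.
move=> Hh i; have := Dec_all Hh (map_mx toC (delta_mx 0 i)).
apply: EB_le => t _.
have -> : Zre (map_mx toC (delta_mx 0 i)) t = e t i 0.
  rewrite /Zre (bigD1 i) //= big1 ?addr0.
    by rewrite !mxE /= (_ : (i == i) = true) ?mul1r //; apply/eqP.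
  by move=> j ji; rewrite !mxE (negbTE ji) andbF /= mul0r.
have -> : Zim (map_mx toC (delta_mx 0 i)) t = 0.
  by rewrite /Zim big1 // => j _; rewrite !mxE /= mul0r.
by rewrite expr0n addr0.
Qed.
End Vec.

Section Alg.
Variable R : realType.
Variable n : nat.
Local Notation N := n.+1.
Variable A : 'M[R]_N.
Variable c : 'rV[R]_N.
Hypothesis C0u : obs_mx c A \in unitmx.

Lemma trmxX (B : 'M[R]_N) k : (B ^+ k)^T = B^T ^+ k.
Proof.
elim: k => [|k IH]; first by rewrite !expr0 trmx1.
by rewrite exprS exprSr -mulmxE trmx_mul IH mulmxE.
Qed.

Definition Om (th : 'cV[R]_N) := (ctrb_mx A^T th)^T.
Definition Em (th : 'cV[R]_N) := invmx (obs_mx c A) *m Om th.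

Lemma row_Om th i : row i (Om th) = th^T *m A ^+ i.
Proof.
apply/rowP => j; rewrite !mxE -trmxX.
by apply: eq_bigr => k _; rewrite !mxE mulrC.
Qed.

Lemma row_C0 i : row i (obs_mx c A) = c *m A ^+ i.
Proof. by apply/rowP => j; rewrite !mxE. Qed.

Lemma Om_lin a th1 th2 : Om (a *: th1 + th2) = a *: Om th1 + Om th2.
Proof.
apply/row_matrixP => i.
have -> : row i (a *: Om th1 + Om th2) = a *: row i (Om th1) + row i (Om th2).
  by apply/rowP => j; rewrite !mxE.
rewrite !row_Om.
by rewrite linearD linearZ /= mulmxDl scalemxAl.
Qed.

Lemma Em_lin a th1 th2 : Em (a *: th1 + th2) = a *: Em th1 + Em th2.
Proof. by rewrite /Em Om_lin mulmxDr scalemxAr. Qed.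

Lemma Em0 : Em 0 = 0.
Proof.
rewrite /Em.
have -> : Om 0 = 0 by apply/matrixP => i j; rewrite !mxE big1 // => k _; rewrite mxE mulr0.
by rewrite mulmx0.
Qed.

Lemma Em_c : Em c^T = 1%:M.
Proof.
rewrite /Em.
have -> : Om c^T = obs_mx c A.
  by apply/row_matrixP => i; rewrite row_Om row_C0 trmxK.
exact: mulVmx.
Qed.

Lemma Em_shift th : Em (A^T *m th) = A *m Em th.
Proof.
set al := th^T *m invmx (obs_mx c A).
have Hth : th^T = al *m obs_mx c A by rewrite /al mulmxKV.
set P := \sum_(k < N) al 0 k *: A ^+ k.
have PA : P *m A = A *m P.
  rewrite /P !mulmxE big_distrl big_distrr /=; apply: eq_bigr => k _.
  by rewrite -scalerAl -scalerAr -exprSr exprS.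
have HO : Om th = obs_mx c A *m P.
  apply/row_matrixP => i; rewrite row_Om row_mul row_C0 Hth [al *m _]mulmx_sum_row.
  rewrite /P !mulmx_sumr mulmx_suml; apply: eq_bigr => k _.
  rewrite row_C0 -scalemxAl -scalemxAr; congr (_ *: _).
  by rewrite -!mulmxA !mulmxE -!exprD addnC.
have HO' : Om (A^T *m th) = Om th *m A.
  apply/row_matrixP => i; rewrite row_mul !row_Om trmx_mul trmxK.
  by rewrite -!mulmxA !mulmxE -exprS -exprSr.
rewrite /Em HO' HO mulmxA mulKmx // -PA mulmxA mulKmx //.
Qed.

Lemma EmD th1 th2 : Em (th1 + th2) = Em th1 + Em th2.
Proof. by have := Em_lin 1 th1 th2; rewrite !scale1r. Qed.

Lemma EmZ a th : Em (a *: th) = a *: Em th.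
Proof. by have := Em_lin a th 0; rewrite !addr0 Em0 addr0. Qed.

Lemma Em_sum th : Em th = \sum_l th l 0 *: Em (delta_mx l 0).
Proof.
have Hs : th = \sum_l th l 0 *: delta_mx l 0.
  rewrite {1}(matrix_sum_delta th); apply: eq_bigr => l _.
  by rewrite big_ord1.
rewrite {1}Hs.
have add : forall x y, Em (x + y) = Em x + Em y.
  by move=> x y; have := Em_lin 1 x y; rewrite !scale1r.
rewrite (big_morph Em add Em0); apply: eq_bigr => l _.
by rewrite -[_ *: _]addr0 Em_lin Em0 addr0.
Qed.

End Alg.

Section Unit.
Variable R : realType.
Variable n : nat.
Local Notation N := n.+1.
Variable ahat : 'cV[R]_N.

Lemma c0A_pow : forall k (j : 'I_N), (k <= j)%N ->
  ((@c0 R n) *m (obs_canon ahat) ^+ k) 0 j = (j == k :> nat)%:R.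
Proof.
elim => [|k IH] j kj.
  by rewrite expr0 mulmx1 !mxE /=.
have kN : (k < N)%N by apply: ltn_trans (ltn_ord j).
rewrite exprSr mulmxA mxE (bigD1 (Ordinal kN)) //= big1 ?addr0.
  rewrite IH //= eqxx mul1r !mxE.
  have -> : (j == 0%N :> nat) = false by apply/negbTE; rewrite -lt0n (leq_ltn_trans _ kj).
  by rewrite mul0r subr0.
move=> l lk.
have lk' : (l != k :> nat) by apply: contra lk => /eqP h; apply/eqP/val_inj.
rewrite [X in _ * X]mxE.
have -> : (j == 0%N :> nat) = false by apply/negbTE; rewrite -lt0n (leq_ltn_trans _ kj).
rewrite mul0r subr0.
have [jl|jl] := eqVneq (val j) l.+1.
  rewrite IH; last by rewrite -ltnS -jl.
  by rewrite (negbTE lk') mul0r.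
by rewrite mulr0.
Qed.

Lemma C0_unit : obs_mx (@c0 R n) (obs_canon ahat) \in unitmx.
Proof.
have trig : is_trig_mx (obs_mx (@c0 R n) (obs_canon ahat)).
  apply/is_trig_mxP => i j ij; rewrite mxE c0A_pow ?(ltnW ij) //.
  by rewrite gtn_eqF.
rewrite unitmxE det_trig // big1 ?unitr1 // => i _.
by rewrite mxE c0A_pow // eqxx.
Qed.
End Unit.

Section Glue.
Variable R : realType.
Variable n : nat.

Lemma derive_lc_gen (th : R -> 'cV[R]_n.+1) (d : 'cV[R]_n.+1) (t : R)
  (cf : 'I_n.+1 -> R) :
  (forall l, is_derive t 1 (fun s => th s l 0) (d l 0)) ->
  is_derive t 1 (fun s => \sum_l cf l * th s l 0) (\sum_l cf l * d l 0).
Proof.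
move=> H.
have := @is_derive_sum _ _ _ n.+1 (fun j s => cf j * th s j 0) t 1 (fun j => cf j * d j 0).
rewrite fct_sumE; apply => j.
Qed.

Lemma Emb_rep (A : 'M[R]_n.+1) (c : 'rV[R]_n.+1) (b v : 'cV[R]_n.+1) i :
  (Em A c v *m b) i 0 = \sum_l (Em A c (delta_mx l 0) *m b) i 0 * v l 0.
Proof.
rewrite Em_sum mulmx_suml summxE; apply: eq_bigr => l _.
by rewrite -scalemxAl mxE mulrC.
Qed.

Lemma Emb_der (A : 'M[R]_n.+1) (c : 'rV[R]_n.+1) (b : 'cV[R]_n.+1)
  (th : R -> 'cV[R]_n.+1) (d : 'cV[R]_n.+1) (t : R) :
  (forall l, is_derive t 1 (fun s => th s l 0) (d l 0)) ->
  forall i, is_derive t 1 (fun s => (Em A c (th s) *m b) i 0) ((Em A c d *m b) i 0).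
Proof.
move=> H i.
have -> : (fun s => (Em A c (th s) *m b) i 0) =
   (fun s => \sum_l (Em A c (delta_mx l 0) *m b) i 0 * th s l 0).
  by apply/funext => s; rewrite Emb_rep.
rewrite Emb_rep; exact: derive_lc_gen.
Qed.

Lemma abs_le_of_sq (x K E : R) : 0 <= K -> 0 <= E -> x ^+ 2 <= K * E ^+ 2 ->
  `|x| <= (1 + K) * E.
Proof.
move=> K0 E0 h.
have ha : 0 <= `|x| by [].
have hx : `|x| ^+ 2 = x ^+ 2 by rewrite real_normK // num_real.
rewrite leNgt; apply/negP => hlt.
have h1 : ((1 + K) * E) ^+ 2 < `|x| ^+ 2.
  rewrite ltr_pXn2r //; first by apply: mulr_ge0 => //; lra.
have h2 : K * E ^+ 2 <= ((1 + K) * E) ^+ 2.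
  rewrite exprMn; apply: ler_wpM2r; first exact: sqr_ge0.
  nra.
lra.
Qed.

End Glue.

Lemma isdB (R : realType) (u v : R -> R) (x du dv : R) : is_derive x 1 u du -> is_derive x 1 v dv ->
  is_derive x 1 (fun t => u t - v t) (du - dv).
Proof. by move=> hu hv; have := is_deriveB hu hv. Qed.

Lemma entry_addsub (R : realType) (N : nat) (M1 M2 M3 : 'cV[R]_N) i :
  (M1 + M2 - M3) i 0 = M1 i 0 + M2 i 0 - M3 i 0.
Proof. by rewrite !mxE. Qed.

Lemma ReNum (R : realType) (z : R[i]) : Re z < 0 -> complex.Re z < 0.
Proof. by rewrite ReE -ReJ_add ltcR. Qed.

Local Close Scope classical_set_scope.

Theorem lemma1 (R : realType) (n : nat) (ahat b_y b_u : 'cV[R]_n.+1)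
  (x th_y th_u : R -> 'cV[R]_n.+1) (y u : R -> R) :
  let A0 := obs_canon ahat in
  let c0 := @c0 R n in
  hurwitz A0 ->
  (forall t : R, y t = (c0 *m x t) 0 0) ->
  (forall t : R, 0 < t -> forall i : 'I_n.+1,
     is_derive t 1 (fun s => x s i 0)
       ((A0 *m x t + y t *: b_y + u t *: b_u) i 0)) ->
  (forall t : R, 0 < t -> forall i : 'I_n.+1,
     is_derive t 1 (fun s => th_y s i 0)
       ((A0^T *m th_y t + y t *: c0^T) i 0)) ->
  (forall t : R, 0 < t -> forall i : 'I_n.+1,
     is_derive t 1 (fun s => th_u s i 0)
       ((A0^T *m th_u t + u t *: c0^T) i 0)) ->
  let C0 := obs_mx c0 A0 in
  let E_y := fun t => invmx C0 *m (ctrb_mx A0^T (th_y t))^T in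
  let E_u := fun t => invmx C0 *m (ctrb_mx A0^T (th_u t))^T in
  exists M lam : R, 0 < lam /\
    forall t : R, 0 <= t -> forall i : 'I_n.+1,
      `|(E_y t *m b_y + E_u t *m b_u - x t) i 0| <= M * expR (- (lam * t)).
Proof.
move=> A0 c0' Hh Hy Hx Hty Htu C0 E_y E_u.
have C0u : C0 \in unitmx := C0_unit ahat.
pose e t := E_y t *m b_y + E_u t *m b_u - x t.
have He : forall t : R, 0 < t -> forall i : 'I_n.+1,
    is_derive t 1 (fun s => e s i 0) ((A0 *m e t) i 0).
  move=> t t0 i.
  have dy := Emb_der A0 c0' b_y (Hty t t0) i.
  have du := Emb_der A0 c0' b_u (Htu t t0) i.
  have dx := Hx t t0 i.
  have -> : (fun s => e s i 0) = (fun s => (Em A0 c0' (th_y s) *m b_y) i 0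
      + (Em A0 c0' (th_u s) *m b_u) i 0 - x s i 0).
    by apply/funext => s; rewrite /e entry_addsub.
  apply: (isdE (isdB (isdD dy du) dx)).
  rewrite -entry_addsub; apply: (congr1 (fun M : 'cV[R]_n.+1 => M i 0)).
  rewrite /e !EmD !EmZ !Em_shift // !Em_c //.
  rewrite !mulmxDl -!scalemxAl !mul1mx -!mulmxA mulmxBr mulmxDr.
  set a1 := A0 *m (_ *m (Om A0 (th_y t) *m b_y)).
  set a2 := A0 *m (_ *m (Om A0 (th_u t) *m b_u)).
  set a3 := A0 *m x t.
  by apply/matrixP => p q; rewrite !mxE; ring.
have Hh' : forall z : R[i], root (map_poly (real_complex R) (char_poly A0)) z ->
    complex.Re z < 0.
  by move=> z hz; apply: ReNum; exact: Hh.
have EBs : EB (fun t => \sum_i e t i 0 ^+ 2).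
  have gen : forall s : seq 'I_n.+1, EB (fun t => \sum_(i <- s) e t i 0 ^+ 2).
    elim => [|i s IH].
      apply: (@EB_le R _ (fun _ => 0)); last exact: EB0.
      by move=> t _; rewrite big_nil.
    have := EB_add (@EB_comp R n A0 e He Hh' i) IH.
    by apply: EB_le => t _; rewrite big_cons.
  exact: gen.
have [B HB] := @back_bound R n A0 e He.
have [K [mu [mu0 HK]]] := EBs.
set lam := mu / 2.
have lam0 : 0 < lam by rewrite /lam; lra.
set S0 := \sum_k e 0 k 0 ^+ 2.
have S00 : 0 <= S0 by apply: sumr_ge0 => k _; exact: sqr_ge0.
set Bd := 1 + `|B| + S0.
have Bd0 : 0 <= Bd by rewrite /Bd; have := normr_ge0 B; lra.
exists ((1 + `|K|) + (1 + Bd) * expR lam), lam; split => // t t0 i.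
rewrite -/(e t).
have E0 := expR_gt0 (- (lam * t)).
have M1 : 0 <= (1 + `|K|) * expR (- (lam * t)).
  by apply: mulr_ge0; [have := normr_ge0 K; lra | exact: ltW].
have M2 : 0 <= (1 + Bd) * expR lam * expR (- (lam * t)).
  by apply: mulr_ge0; [apply: mulr_ge0; [lra | exact: expR_ge0] | exact: ltW].
rewrite mulrDl.
have [t1|t1] := ltP t 1.
  have hsq : e t i 0 ^+ 2 <= Bd * 1 ^+ 2.
    rewrite expr1n mulr1.
    have [->|tp] := eqVneq t 0.
      have := sq_le_sum (e 0) i; rewrite -/S0 /Bd; have := normr_ge0 B; lra.
    have tpos : 0 < t by rewrite lt_neqAle eq_sym tp t0.
    have := HB t tpos (ltW t1) i; have := ler_norm B; rewrite /Bd; lra.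
  have := abs_le_of_sq Bd0 ler01 hsq; rewrite mulr1 => ha.
  have ex : 1 <= expR lam * expR (- (lam * t)).
    rewrite -expRD -expR0 ler_expR.
    have : lam * t <= lam * 1 by apply: ler_wpM2l; [exact: ltW | exact: ltW].
    lra.
  have : 1 + Bd <= (1 + Bd) * expR lam * expR (- (lam * t)).
    rewrite -mulrA -{1}[1 + Bd]mulr1; apply: ler_wpM2l => //; lra.
  lra.
have hsq : e t i 0 ^+ 2 <= `|K| * expR (- (lam * t)) ^+ 2.
  have h1 := sq_le_sum (e t) i.
  have h2 := HK t t1.
  have -> : expR (- (lam * t)) ^+ 2 = expR (- (mu * t)).
    by rewrite expr2 -expRD /lam; congr expR; field.
  have : K * expR (- (mu * t)) <= `|K| * expR (- (mu * t)).
    by apply: ler_wpM2r; [exact: expR_ge0 | exact: ler_norm].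
  lra.
have := abs_le_of_sq (normr_ge0 K) (ltW E0) hsq.
lra.
Qed.
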